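(* Let $d\ge1$ and let $a(t)=\sum_{n\ge0}a_nt^n=\frac{h_0(a)+\cdots+h_\lambda(a)t^\lambda}{(1-t)^d}$ be a rational formal power series with integer coefficients, $h_\lambda(a)\ne0$. If $h_i(a)\ge0$ for $0\le i\le\lambda$, then for every $0\le i\le\lfloor d/2\rfloor$, $g_i(a)\le g_i(a^{\langle d\rangle})\le g_i(a^{\langle d+1\rangle})\le g_i(a^{\langle d+2\rangle})\le\cdots$.
   Context: One sets $h_i(a)=0$ for $i>\lambda$. For an integer $r\ge1$, the $r$-th Veronese series is $a^{\langle r\rangle}(t)=\sum_{n\ge0}a_{nr}t^n$; it can again be written as $\frac{h_0(a^{\langle r\rangle})+\cdots+h_{\lambda'}(a^{\langle r\rangle})t^{\lambda'}}{(1-t)^d}$ with the same $d$ and polynomial numerator, with $h_i(a^{\langle r\rangle})=0$ beyond its degree. For any such series $b(t)$ the $g$-vector entries are $g_0(b)=h_0(b)$ and $g_i(b)=h_i(b)-h_{i-1}(b)$ for $i\ge1$. *)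

(* Defs.v *)
From HB Require Import structures.
From mathcomp Require Import all_boot all_order all_algebra.
Set Implicit Arguments. Unset Strict Implicit. Unset Printing Implicit Defensive.
Import Order.TTheory GRing.Theory Num.Theory.
Local Open Scope ring_scope.

(* A formal power series b(t) = sum_n b n t^n with integer coefficients is
   represented by its coefficient sequence b : nat -> int.
   hvec d b i is the coefficient of t^i in (1-t)^d * b(t); when
   b(t) = (h_0 + ... + h_l t^l)/(1-t)^d, this is exactly h_i(b)
   (and it is 0 for i > l). *)
Definition hvec (d : nat) (b : nat -> int) (i : nat) : int :=
  \sum_(j < d.+1 | (j <= i)%N) (-1) ^+ j * ('C(d, j))%:Z * b (i - j)%N.

Definition gvec (d : nat) (b : nat -> int) (i : nat) : int :=
  if i is i'.+1 then hvec d b i - hvec d b i' else hvec d b 0%N.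

Definition veronese (r : nat) (b : nat -> int) : nat -> int :=
  fun n => b (n * r)%N.

(* Main.v *)
Require Import Defs.
From HB Require Import structures.
From mathcomp Require Import all_boot all_order all_algebra.
From mathcomp Require Import zify ring lra.
Set Implicit Arguments. Unset Strict Implicit. Unset Printing Implicit Defensive.
Import Order.TTheory GRing.Theory Num.Theory.
Local Open Scope ring_scope.

Fixpoint E (n r : nat) (m : int) {struct n} : int :=
  if n is n'.+1 then \sum_(a < r) E n' r (m - a%:Z) else if m == 0 then 1 else 0.

Definition CC (n r : nat) : int := (n * r.-1)%N%:Z.

Lemma CC0 r : CC 0 r = 0. Proof. by rewrite /CC mul0n. Qed.
Lemma CCS n r : CC n.+1 r = CC n r + (r.-1)%:Z.
Proof. by rewrite /CC mulSn PoszD addrC. Qed.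
Lemma CC_ge0 n r : 0 <= CC n r. Proof. by []. Qed.

Lemma E_neg n r m : m < 0 -> E n r m = 0.
Proof.
elim: n m => [|n IH] m hm /=.
  by case: eqP => // h; move: hm; rewrite h ltxx.
rewrite big1 // => a _; apply: IH; lia.
Qed.

Lemma E_ge0 n r m : 0 <= E n r m.
Proof.
elim: n m => [|n IH] m /=; first by case: eqP.
by apply: sumr_ge0 => a _.
Qed.

Lemma E_big n r m : CC n r < m -> E n r m = 0.
Proof.
elim: n m => [|n IH] m hm /=.
  by rewrite CC0 in hm; case: eqP => // h; move: hm; rewrite h ltxx.
rewrite big1 // => a _; apply: IH; rewrite CCS in hm.
have := ltn_ord a; lia.
Qed.

Lemma E_sym n r m : E n r m = E n r (CC n r - m).
Proof.
elim: n m => [|n IH] m /=.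
  rewrite CC0 sub0r; case: eqP => [->|h]; first by rewrite eqxx.
  by case: eqP => // h'; case: h; rewrite -[m]opprK h' oppr0.
rewrite (reindex_inj rev_ord_inj) /=.
apply: eq_bigr => a _; rewrite IH CCS; congr E.
have := ltn_ord a; lia.
Qed.

Lemma E0 n r : (0 < r)%N -> E n r 0 = 1.
Proof.
case: r => // r _; elim: n => [|n IH] //=.
rewrite big_ord_recl /= subr0 IH big1 ?addr0 // => a _.
apply: E_neg; rewrite /bump /=; lia.
Qed.

Lemma E_diff n r x : E n.+1 r x - E n.+1 r (x - 1) = E n r x - E n r (x - r%:Z).
Proof.
rewrite /= -sumrB.
have -> : \sum_(a < r) (E n r (x - a%:Z) - E n r (x - 1 - a%:Z)) =
   - \sum_(0 <= a < r) (E n r (x - (a.+1)%:Z) - E n r (x - a%:Z)).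
  rewrite big_mkord -sumrN; apply: eq_bigr => a _.
  by rewrite opprB -addrA -opprD -PoszD add1n.
by rewrite telescope_sumr // subr0 opprB.
Qed.

Lemma mono_of_step (f : int -> int) (C : int) :
  (forall x, 2 * x <= C + 1 -> f (x - 1) <= f x) ->
  forall x y, 2 * x <= C -> y <= x -> f y <= f x.
Proof.
move=> hs x y hx hy.
have [k ->] : exists k : nat, y = x - k%:Z by exists `|x - y|%N; rewrite abszE ger0_norm ?subr_ge0 //; lia.
elim: k => [|k IH]; first by rewrite subr0.
apply: le_trans IH.
have -> : x - k.+1%:Z = (x - k%:Z) - 1 by lia.
apply: hs; lia.
Qed.

Lemma mono_sym (f : int -> int) (C : int) :
  (forall x, f x = f (C - x)) ->
  (forall x y, 2 * x <= C -> y <= x -> f y <= f x) ->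
  forall x y, y <= x -> y <= C - x -> f y <= f x.
Proof.
move=> hsym hm x y h1 h2.
case: (lerP (2 * x) C) => hx; first exact: hm.
rewrite [f x]hsym; apply: hm => //; lia.
Qed.

Lemma E_step n r : (0 < r)%N ->
  forall x, 2 * x <= CC n r + 1 -> E n r (x - 1) <= E n r x.
Proof.
move=> r0; elim: n => [|n IH] x hx.
  rewrite CC0 in hx; rewrite /=.
  case: eqP => h1; case: eqP => h2 //; lia.
rewrite -subr_ge0 E_diff subr_ge0.
apply: (mono_sym (@E_sym n r) (mono_of_step IH)).
  lia.
rewrite CCS in hx; lia.
Qed.

Lemma E_mono n r x y : (0 < r)%N -> y <= x -> y <= CC n r - x -> E n r y <= E n r x.
Proof.
move=> r0; apply: (mono_sym (@E_sym n r) (mono_of_step (@E_step n r r0))).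
Qed.

Lemma CC_succr n r : (0 < r)%N -> CC n r.+1 = CC n r + n%:Z.
Proof. by case: r => // r _; rewrite /CC /= mulnS PoszD addrC. Qed.

Lemma E_pos n r x : (0 < r)%N -> 0 <= x -> x <= CC n r -> 1 <= E n r x.
Proof.
move=> r0 h1 h2; rewrite -(E0 n r0); apply: E_mono => //; lia.
Qed.

Lemma Tlow n r x : (0 < r)%N -> 0 <= x -> x < r%:Z ->
  1 <= E n.+2 r x - E n.+2 r (x - 1).
Proof.
move=> r0 h1 h2; rewrite E_diff (@E_neg _ _ (x - r%:Z)); last lia.
rewrite subr0; apply: E_pos => //.
have := CC_ge0 n r; rewrite CCS; lia.
Qed.

Lemma Tpos n r x : (0 < r)%N -> 0 <= x -> 2 * x <= CC n.+2 r ->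
  1 <= E n.+2 r x - E n.+2 r (x - 1).
Proof.
move=> r0; elim: n x => [|n IH] x h1 h2.
  apply: Tlow => //; move: h2; rewrite !CCS CC0; lia.
case: (ltrP x r%:Z) => hxr; first exact: Tlow.
have hI := IH (x - r%:Z + 1).
have e : x - r%:Z + 1 - 1 = x - r%:Z by lia.
rewrite e in hI.
have hm : E n.+2 r (x - r%:Z + 1) <= E n.+2 r x.
  apply: E_mono => //; move: h2; rewrite !CCS; lia.
rewrite E_diff; apply: le_trans (hI _ _) _.
- lia.
- move: h2; rewrite !CCS; lia.
- by rewrite lerD2r.
Qed.

Lemma tele (f : int -> int) z (L : nat) :
  f (z + L%:Z) - f z = \sum_(t < L) (f (z + t%:Z + 1) - f (z + t%:Z)).
Proof.
elim: L => [|L IH]; first by rewrite big_ord0 addr0 subrr.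
rewrite big_ord_recr /= -IH.
have -> : z + L.+1%:Z = z + L%:Z + 1 by lia.
ring.
Qed.

Lemma Cmono p : forall s r m, (0 < r)%N -> (2 * s <= p)%N ->
  2 * (m + s%:Z) <= CC p.+1 r.+1 ->
  E p r m - E p r (m - r%:Z) <= E p r.+1 (m + s%:Z) - E p r.+1 (m + s%:Z - r.+1%:Z).
Proof.
elim: p => [|p IH] s r m r0 hs hm.
  have s0 : s = 0%N by lia.
  subst s; rewrite /CC /= mul1n in hm; rewrite /=.
  case: eqP => h1; case: eqP => h2; case: eqP => h3; case: eqP => h4; lia.
pose s' := if (2 * s <= p)%N then s else s.-1.
have hs'1 : (2 * s' <= p)%N by rewrite /s'; case: ifP => h; lia.
have hs'2 : (s' <= s)%N by rewrite /s'; case: ifP => h; lia.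
have hs'3 : (s <= s'.+1)%N by rewrite /s'; case: ifP => h; lia.
have hs'4 : (s + s' <= p.+1)%N by rewrite /s'; case: ifP => h; lia.
set Cq := CC p.+1 r.
have eCq' : CC p.+1 r.+1 = Cq + p.+1%:Z by rewrite CC_succr.
have eC2 : CC p.+2 r.+1 = Cq + p.+1%:Z + r%:Z.
  by rewrite CCS eCq'.
rewrite eC2 in hm.
set g := E p.+1 r.+1.
have RHS0 : 0 <= g (m + s%:Z) - g (m + s%:Z - r.+1%:Z).
  rewrite subr_ge0; apply: E_mono => //; rewrite ?eCq'; lia.
have K : forall b, m - r%:Z <= b -> b <= m -> 2 * b <= Cq -> b <= Cq - m ->
    E p.+1 r b - E p.+1 r (m - r%:Z) <= g (m + s%:Z) - g (m + s%:Z - r.+1%:Z).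
  move=> b hb1 hb2 hb3 hb4.
  have [L eL] : exists L : nat, b = m - r%:Z + L%:Z.
    exists (absz (b - (m - r%:Z))%R); rewrite abszE ger0_norm ?subr_ge0 //; lia.
  have step1 : E p.+1 r b - E p.+1 r (m - r%:Z) <=
      g (b + s'%:Z) - g (m - r%:Z + s'%:Z).
    rewrite eL tele.
    have -> : m - r%:Z + L%:Z + s'%:Z = (m - r%:Z + s'%:Z) + L%:Z by ring.
    rewrite tele; apply: ler_sum => t _.
    have e1 : m - r%:Z + t%:Z = (m - r%:Z + t%:Z + 1) - 1 by ring.
    have e2 : m - r%:Z + s'%:Z + t%:Z = (m - r%:Z + s'%:Z + t%:Z + 1) - 1 by ring.
    rewrite [X in _ - E _ _ X]e1 [X in _ - g X]e2 /g !E_diff.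
    have -> : m - r%:Z + s'%:Z + t%:Z + 1 = (m - r%:Z + t%:Z + 1) + s'%:Z by ring.
    apply: IH => //.
    have ht := ltn_ord t.
    rewrite eCq'; lia.
  apply: le_trans step1 _.
  apply: lerB.
    apply: E_mono => //; rewrite ?eCq'; lia.
  apply: E_mono => //; rewrite ?eCq'; lia.
case: (lerP (2 * m) Cq) => hmC.
  apply: K => //; lia.
rewrite [E p.+1 r m]E_sym -/Cq.
case: (lerP (m - r%:Z) (Cq - m)) => h2.
  apply: K => //; lia.
apply: le_trans RHS0.
rewrite subr_le0; apply: E_mono => //; lia.
Qed.

Lemma D1 d i k : (2 * i.+1 <= d)%N ->
  (if k == i.+1 then 1 else 0) - (if k == i then 1 else 0) <=
  E d d ((i.+1 * d)%N%:Z - k%:Z) - E d d ((i * d)%N%:Z - k%:Z).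
Proof.
move=> hd.
have [n en] : exists n, d = n.+2 by exists d.-2; lia.
have h1 : (2 * (i.+1 * d) <= d * d)%N by rewrite mulnA leq_mul2r hd orbT.
have eC : CC d d = (d * d)%N%:Z - d%:Z by rewrite /CC en /=; nia.
set m := (i.+1 * d)%N%:Z - k%:Z.
have em : (i * d)%N%:Z - k%:Z = m - d%:Z by rewrite /m mulSn PoszD; ring.
rewrite em.
have d0 : (0 < d)%N by lia.
have R0 : 0 <= E d d m - E d d (m - d%:Z).
  rewrite subr_ge0; apply: E_mono => //; rewrite ?eC /m; lia.
case: eqP => hk.
  have -> : (k == i) = false by apply/eqP; lia.
  rewrite subr0.
  have e2 : E d d m - E d d (m - d%:Z) =
     (E d d m - E d d (m - 1)) + (E d d (m - 1) - E d d (m - d%:Z)) by ring.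
  rewrite e2; apply: ler_wpDr.
    rewrite subr_ge0; apply: E_mono => //; rewrite ?eC /m; lia.
  have T := @Tpos n d m d0; rewrite -en in T; apply: T.
    rewrite /m hk; nia.
  rewrite eC /m hk; nia.
apply: le_trans R0; case: eqP => _; lia.
Qed.

Fixpoint Pn (d n : nat) {struct d} : int :=
  if d is d'.+1 then \sum_(l < n.+1) Pn d' l else if n == 0%N then 1 else 0.

Definition P (d : nat) (m : int) : int :=
  match m with Posz n => Pn d n | Negz _ => 0 end.

Lemma P_neg d m : m < 0 -> P d m = 0.
Proof. by case: m. Qed.

Lemma P_diff d x : P d.+1 x - P d.+1 (x - 1) = P d x.
Proof.
case: x => [[|n]|n].
- by rewrite /= big_ord1 subr0.
- have -> : (Posz n.+1 - 1) = Posz n by rewrite -addn1 PoszD addrK.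
  by rewrite /= big_ord_recr /= addrAC subrr add0r.
- by rewrite P_neg ?subrr ?P_neg.
Qed.

Lemma P_win d r x : \sum_(a < r) P d (x - a%:Z) = P d.+1 x - P d.+1 (x - r%:Z).
Proof.
elim: r => [|r IH]; first by rewrite big_ord0 subr0 subrr.
rewrite big_ord_recr /= IH -(P_diff d (x - r%:Z)).
have -> : x - r%:Z - 1 = x - r.+1%:Z by lia.
ring.
Qed.

Lemma Iden d r m :
  \sum_(j < d.+1) (-1) ^+ j * ('C(d, j))%:Z * P d (m - (j * r)%N%:Z) = E d r m.
Proof.
elim: d m => [|d IH] m.
  rewrite big_ord1 /= mul0n subr0 mul1r.
  by case: m => [n|n] //=; case: n.
rewrite /=.
set F := fun j : nat => P d.+1 (m - (j * r)%N%:Z).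
have H : forall j : nat, \sum_(a < r) P d (m - (j * r)%N%:Z - a%:Z) = F j - F j.+1.
  move=> j; rewrite P_win /F; congr (_ - P _ _).
  rewrite mulSn PoszD; ring.
transitivity (\sum_(j < d.+1) (-1) ^+ j * ('C(d, j))%:Z * (F j - F j.+1)).
  have e1 : forall j : 'I_d.+2, (-1) ^+ j * ('C(d.+1, j))%:Z * F j =
     (-1) ^+ j * ('C(d, j))%:Z * F j +
     (if (j : nat) is j'.+1 then - ((-1) ^+ j' * ('C(d, j'))%:Z * F j) else 0).
    case=> [[|j] hj] /=; first by rewrite !bin0 addr0.
    by rewrite binS PoszD exprS; ring.
  rewrite (eq_bigr _ (fun j _ => e1 j)) big_split /=.
  rewrite [X in X + _]big_ord_recr /= bin_small // mulr0 mul0r addr0.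
  rewrite [X in _ + X]big_ord_recl /= add0r.
  rewrite -big_split; apply: eq_bigr => j _ /=.
  rewrite /bump /= add1n. ring.
rewrite (eq_bigr (fun a : 'I_r => \sum_(j < d.+1) (-1) ^+ j * ('C(d, j))%:Z * P d (m - (j * r)%N%:Z - a%:Z))); last first.
  move=> a _; rewrite -IH; apply: eq_bigr => j _.
  by congr (_ * P _ _); ring.
rewrite exchange_big /=; apply: eq_bigr => j _.
by rewrite -mulr_sumr H.
Qed.

Lemma hvec_ver d (h : nat -> int) L (b : nat -> int) r : (0 < r)%N ->
  (forall n, b n = \sum_(k < L) h k * P d ((n * r)%N%:Z - k%:Z)) ->
  forall i, hvec d b i = \sum_(k < L) h k * E d r ((i * r)%N%:Z - k%:Z).
Proof.
move=> r0 hb i; rewrite /hvec big_mkcond /=.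
transitivity (\sum_(j < d.+1) (-1) ^+ j * ('C(d, j))%:Z *
    \sum_(k < L) h k * P d ((i * r)%N%:Z - k%:Z - (j * r)%N%:Z)).
  apply: eq_bigr => j _; case: ifP => hj.
    rewrite hb; congr (_ * _); apply: eq_bigr => k _; congr (_ * P _ _).
    nia.
  rewrite big1 ?mulr0 // => k _; rewrite P_neg ?mulr0 //.
  have hj' : (i < j)%N by rewrite ltnNge hj.
  nia.
rewrite (eq_bigr (fun j : 'I_d.+1 => \sum_(k < L) (-1) ^+ j * ('C(d, j))%:Z *
    (h k * P d ((i * r)%N%:Z - k%:Z - (j * r)%N%:Z)))); last by move=> j _; rewrite mulr_sumr.
rewrite exchange_big /=; apply: eq_bigr => k _.
rewrite -Iden mulr_sumr; apply: eq_bigr => j _; ring.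
Qed.

Lemma hvec_uniq d (c : nat -> int) : (forall n, hvec d c n = 0) -> forall n, c n = 0.
Proof.
move=> hc n; elim: n {-2}n (leqnn n) => [|N IH] n hn.
  have := hc n; rewrite /hvec (bigD1 ord0) //= big1 ?addr0.
    by move=> H; rewrite -[RHS]H subn0 expr0 bin0; ring.
  move=> j /andP [hj1 hj2]; have : (nat_of_ord j = 0)%N.
    apply/eqP; move: hn hj1; rewrite leqn0 => /eqP ->; by rewrite leqn0.
  by move=> e; move: hj2; rewrite -val_eqE /= e.
have := hc n; rewrite /hvec (bigD1 ord0) //= big1 ?addr0.
  by move=> H; rewrite -[RHS]H subn0 expr0 bin0; ring.
move=> j /andP [hj1 hj2].
rewrite IH ?mulr0 //.
have : (nat_of_ord j != 0)%N by rewrite -val_eqE /= in hj2.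
lia.
Qed.

Lemma E1 d m : E d 1 m = if m == 0 then 1 else 0.
Proof. elim: d m => [|d IH] m //=; by rewrite big_ord1 subr0 IH. Qed.

Lemma hvecB d (f g : nat -> int) i :
  hvec d (fun n => f n - g n) i = hvec d f i - hvec d g i.
Proof. rewrite /hvec -sumrB; apply: eq_bigr => j _; ring. Qed.

Unset Implicit Arguments.

Theorem mainTheorem11 (d : nat) (a : nat -> int) (lam : nat)
  (hd : (1 <= d)%N)
  (hrat : forall i : nat, (lam < i)%N -> hvec d a i = 0)
  (hlam : hvec d a lam != 0)
  (hnn : forall i : nat, (i <= lam)%N -> 0 <= hvec d a i) :
  forall i : nat, (i <= d./2)%N ->
    gvec d a i <= gvec d (veronese d a) i /\
    (forall r : nat, (d <= r)%N ->
       gvec d (veronese r a) i <= gvec d (veronese r.+1 a) i).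
Proof.
set h := hvec d a.
pose a' n := \sum_(k < lam.+1) h k * P d (n%:Z - k%:Z).
have ha' : forall n, hvec d a' n = h n.
  move=> n; rewrite (@hvec_ver d h lam.+1 a' 1%N) //; last first.
    by move=> m; rewrite muln1.
  rewrite muln1.
  have e : forall k : 'I_lam.+1, h k * E d 1 (n%:Z - k%:Z) =
      if (nat_of_ord k == n) then h n else 0.
    move=> k; rewrite E1; case: eqP => h1; case: eqP => h2.
    - by rewrite h2 mulr1.
    - lia.
    - lia.
    - by rewrite mulr0.
  rewrite (eq_bigr _ (fun k _ => e k)).
  case: (ltnP n lam.+1) => hn.
    rewrite (bigD1 (Ordinal hn)) //= eqxx big1 ?addr0 // => k hk.
    case: eqP => // hk'; case/eqP: hk; apply: val_inj; exact: hk'.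
  rewrite big1; first by rewrite /h hrat.
  move=> k _; case: eqP => // hk.
  have := ltn_ord k; lia.
have eqa : forall n, a n = a' n.
  move=> n; apply/eqP; rewrite -subr_eq0; apply/eqP; move: n.
  apply: (@hvec_uniq d (fun n => a n - a' n)) => n.
  by rewrite hvecB ha' subrr.
have gv : forall r i, (0 < r)%N -> gvec d (veronese r a) i.+1 =
    \sum_(k < lam.+1) h k * (E d r ((i.+1 * r)%N%:Z - k%:Z) - E d r ((i * r)%N%:Z - k%:Z)).
  move=> r i r0; rewrite /gvec.
  have hb : forall n, veronese r a n = \sum_(k < lam.+1) h k * P d ((n * r)%N%:Z - k%:Z).
    by move=> n; rewrite /veronese eqa.
  rewrite !(hvec_ver r0 hb) -sumrB; apply: eq_bigr => k _; ring.
have gv1 : forall i, gvec d a i.+1 =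
    \sum_(k < lam.+1) h k * (E d 1 ((i.+1 * 1)%N%:Z - k%:Z) - E d 1 ((i * 1)%N%:Z - k%:Z)).
  move=> i; rewrite /gvec.
  have hb : forall n, a n = \sum_(k < lam.+1) h k * P d ((n * 1)%N%:Z - k%:Z).
    by move=> n; rewrite eqa muln1.
  rewrite !(@hvec_ver d h lam.+1 a 1%N) // -sumrB; apply: eq_bigr => k _; ring.
have hk0 : forall k : 'I_lam.+1, 0 <= h k.
  move=> k; apply: hnn; have := ltn_ord k; lia.
move=> [|i] hi.
  have e0 : forall r, (0 < r)%N -> hvec d (veronese r a) 0 = h 0%N.
    move=> r r0; rewrite /h /hvec; apply: eq_bigr => j _.
    by rewrite /veronese mul0n.
  rewrite /gvec e0 //; split => // r hr; rewrite !e0 //; lia.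
have hi2 : (2 * i.+1 <= d)%N.
  move: hi; rewrite geq_half_double -muln2; lia.
split.
  rewrite gv1 gv; last lia.
  apply: ler_sum => k _; apply: ler_wpM2l => //.
  rewrite !muln1 !E1.
  have e : forall x y : nat, ((x%:Z - y%:Z) == 0) = (y == x).
    by move=> x y; apply/eqP/eqP => hh; lia.
  rewrite !e; exact: D1.
move=> r hr.
have r0 : (0 < r)%N by lia.
rewrite !gv //.
apply: ler_sum => k _; apply: ler_wpM2l => //.
have h1 : (2 * i.+1 * r.+1 <= d * r.+1)%N by rewrite leq_mul2r hi2 orbT.
have h2 : (d * r.+1 <= d.+1 * r)%N by rewrite mulnS mulSn leq_add2r.
have hm : 2 * ((i.+1 * r)%N%:Z - k%:Z + i.+1%:Z) <= CC d.+1 r.+1.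
  rewrite /CC /=; nia.
have C := @Cmono d i.+1 r ((i.+1 * r)%N%:Z - k%:Z) r0 hi2 hm.
have e1 : (i * r)%N%:Z - k%:Z = (i.+1 * r)%N%:Z - k%:Z - r%:Z by rewrite mulSn PoszD; ring.
have e2 : (i.+1 * r.+1)%N%:Z - k%:Z = (i.+1 * r)%N%:Z - k%:Z + i.+1%:Z by rewrite mulnS PoszD; ring.
have e3 : (i * r.+1)%N%:Z - k%:Z = (i.+1 * r)%N%:Z - k%:Z + i.+1%:Z - r.+1%:Z.
  rewrite !mulnS !mulSn !PoszD; ring.
by rewrite e1 e2 e3.
Qed.
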